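(* Lifting preserves connected limits, in particular projective limits. Precisely: let $\mathbf I$ be a connected small category, $F\colon\mathbf I\to\mathbf{Top}$ a diagram, and $X,(p_i)_{i\in|\mathbf I|}$ a limit of $F$ in $\mathbf{Top}$. Then $X_\bot,(p_{i\bot})_{i\in|\mathbf I|}$ is a limit of the diagram $(\cdot)_\bot\circ F$.
   Context: $\mathbf{Top}$ is the category of topological spaces and continuous maps; $|\mathbf I|$ is the set of objects of $\mathbf I$. A small category is connected if it has at least one object and the smallest equivalence relation on objects relating $i,j$ whenever there is a morphism $i\to j$ relates all objects. The lifting $Y_\bot$ of a space $Y$ is obtained by adding a fresh point $\bot$, its open sets being the open sets of $Y$ together with $Y_\bot$ itself. For a continuous $f\colon Y\to Z$, $f_\bot\colon Y_\bot\to Z_\bot$ equals $f$ on $Y$ and maps $\bot$ to $\bot$; this makes $(\cdot)_\bot$ a functor. *)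

(* Defs.v *)
From Stdlib Require Import Classical Relations.
Set Implicit Arguments.

Record space := Space {
  carrier :> Type;
  is_open : (carrier -> Prop) -> Prop;
  open_ext : forall U V : carrier -> Prop,
      (forall x, U x <-> V x) -> is_open U -> is_open V;
  open_full : is_open (fun _ => True);
  open_inter : forall U V, is_open U -> is_open V -> is_open (fun x => U x /\ V x);
  open_union : forall (J : Type) (U : J -> carrier -> Prop),
      (forall j, is_open (U j)) -> is_open (fun x => exists j, U j x)
}.

Arguments open_ext {s} U V _ _.
Arguments open_full {s}.
Arguments open_inter {s} U V _ _.
Arguments open_union {s} {J} U _.

Record cmap (X Y : space) := CMap {
  cfun :> X -> Y;
  cfun_cont : forall V, is_open Y V -> is_open X (fun x => V (cfun x))
}.

(* Lifting: Y_bot has carrier option Y, with None playing the role of bot;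
   open sets are Y_bot itself and (the images of) the open sets of Y. *)
Definition lift_open (X : space) (U : option X -> Prop) : Prop :=
  (forall x, U x) \/ (~ U None /\ is_open X (fun y => U (Some y))).
Arguments lift_open {X} U.

Lemma lift_open_ext (X : space) (U V : option X -> Prop) :
  (forall x, U x <-> V x) -> lift_open U -> lift_open V.
Proof.
  intros H [HU | [HN HU]].
  - left; intro x; apply H, HU.
  - right; split.
    + intro HV; apply HN, H, HV.
    + apply (open_ext (fun y => U (Some y))); [intro y; apply H | exact HU].
Qed.

Lemma lift_open_full (X : space) : @lift_open X (fun _ => True).
Proof. left; trivial. Qed.

Lemma lift_open_inter (X : space) (U V : option X -> Prop) :
  lift_open U -> lift_open V -> lift_open (fun x => U x /\ V x).
Proof.
  intros [HU | [UN HU]] [HV | [VN HV]].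
  - left; intro x; split; auto.
  - right; split; [intros [_ h]; auto|].
    apply (open_ext (fun y => V (Some y))); [intro y; split; [split; auto | tauto] | exact HV].
  - right; split; [intros [h _]; auto|].
    apply (open_ext (fun y => U (Some y))); [intro y; split; [split; auto | tauto] | exact HU].
  - right; split; [intros [h _]; auto|].
    exact (open_inter _ _ HU HV).
Qed.

Lemma lift_open_union (X : space) (J : Type) (U : J -> option X -> Prop) :
  (forall j, lift_open (U j)) -> lift_open (fun x => exists j, U j x).
Proof.
  intro H.
  destruct (classic (exists j, forall x, U j x)) as [[j Hj] | Hn].
  - left; intro x; exists j; apply Hj.
  - right; split.
    + intros [j Hj]. destruct (H j) as [Hf | [HN _]]; [apply Hn; exists j; exact Hf | exact (HN Hj)].
    + apply (open_union (fun j y => U j (Some y))).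
      intro j; destruct (H j) as [Hf | [_ Ho]]; [exfalso; apply Hn; exists j; exact Hf | exact Ho].
Qed.

Definition lift (X : space) : space :=
  @Space (option X) (@lift_open X) (@lift_open_ext X) (@lift_open_full X)
         (@lift_open_inter X) (@lift_open_union X).

Definition lift_fun (X Y : space) (f : X -> Y) (o : option X) : option Y :=
  match o with None => None | Some x => Some (f x) end.

Arguments lift_fun {X Y} f o.

Lemma lift_fun_cont (X Y : space) (f : cmap X Y) :
  forall V, is_open (lift Y) V -> is_open (lift X) (fun x => V (lift_fun f x)).
Proof.
  intros V [HV | [HN HV]].
  - left; intro x; apply HV.
  - right; split; [exact HN |].
    exact (cfun_cont f _ HV).
Qed.

Definition lift_map (X Y : space) (f : cmap X Y) : cmap (lift X) (lift Y) :=
  @CMap (lift X) (lift Y) (lift_fun f) (lift_fun_cont f).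

Arguments lift_map {X Y} f.

Record category := Category {
  obj : Type;
  hom : obj -> obj -> Type;
  idm : forall a, hom a a;
  comp : forall a b c, hom b c -> hom a b -> hom a c;
  comp_id_l : forall a b (f : hom a b), comp (idm b) f = f;
  comp_id_r : forall a b (f : hom a b), comp f (idm a) = f;
  comp_assoc : forall a b c d (h : hom c d) (g : hom b c) (f : hom a b),
      comp h (comp g f) = comp (comp h g) f
}.
Arguments idm {c} a : rename.
Arguments comp {c a b c0} _ _ : rename.

Definition connected (I : category) : Prop :=
  inhabited (obj I) /\
  forall i j : obj I,
    clos_refl_sym_trans (obj I) (fun a b => inhabited (hom I a b)) i j.

Record diagram (I : category) := Diagram {
  dobj : obj I -> space;
  dmap : forall i j, hom I i j -> cmap (dobj i) (dobj j);
  dmap_id : forall i x, dmap i i (idm i) x = x;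
  dmap_comp : forall i j k (g : hom I j k) (f : hom I i j) x,
      dmap i k (comp g f) x = dmap j k g (dmap i j f x)
}.
Arguments dmap {I} d {i j} _.

Lemma lift_dmap_id (I : category) (D : diagram I) :
  forall i x, lift_map (dmap D (idm i)) x = x.
Proof. intros i [x|]; simpl; [rewrite dmap_id|]; reflexivity. Qed.

Lemma lift_dmap_comp (I : category) (D : diagram I) :
  forall i j k (g : hom I j k) (f : hom I i j) x,
    lift_map (dmap D (comp g f)) x = lift_map (dmap D g) (lift_map (dmap D f) x).
Proof. intros i j k g f [x|]; simpl; [rewrite dmap_comp|]; reflexivity. Qed.

Definition lift_diagram (I : category) (D : diagram I) : diagram I :=
  @Diagram I (fun i => lift (dobj D i))
    (fun i j u => lift_map (dmap D u)) (@lift_dmap_id I D) (@lift_dmap_comp I D).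

Definition is_cone (I : category) (D : diagram I) (X : space)
    (p : forall i, cmap X (dobj D i)) : Prop :=
  forall i j (u : hom I i j) (x : X), dmap D u (p i x) = p j x.

Definition is_limit (I : category) (D : diagram I) (X : space)
    (p : forall i, cmap X (dobj D i)) : Prop :=
  is_cone D p /\
  forall (Z : space) (q : forall i, cmap Z (dobj D i)),
    is_cone D q ->
    exists h : cmap Z X,
      (forall i z, p i (h z) = q i z) /\
      (forall h' : cmap Z X, (forall i z, p i (h' z) = q i z) -> forall z, h' z = h z).

(* Main.v *)
Require Import Defs.
From Stdlib Require Import Classical ClassicalEpsilon ProofIrrelevance Relations.
Set Implicit Arguments.

Definition subsp_is_open (Z : space) (P : Z -> Prop) (V : {z | P z} -> Prop) : Prop :=
  is_open Z (fun z => exists n : P z, V (exist _ z n)).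

Lemma subsp_ext (Z : space) (P : Z -> Prop) (U V : {z | P z} -> Prop) :
  (forall x, U x <-> V x) -> @subsp_is_open Z P U -> @subsp_is_open Z P V.
Proof.
  intros H HU. unfold subsp_is_open in *.
  apply (open_ext _ _ (fun z => conj (fun h => match h with ex_intro _ n h' => ex_intro _ n (proj1 (H _) h') end)
     (fun h => match h with ex_intro _ n h' => ex_intro _ n (proj2 (H _) h') end))) in HU.
  exact HU.
Qed.

Section Sub.
Variables (Z : space) (P : Z -> Prop) (HP : is_open Z P).

Lemma subsp_full : @subsp_is_open Z P (fun _ => True).
Proof.
  unfold subsp_is_open. apply (open_ext P); [|exact HP].
  intro z; split; [intro n; exists n; trivial | intros [n _]; exact n].
Qed.

Lemma subsp_inter (U V : {z | P z} -> Prop) :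
  @subsp_is_open Z P U -> @subsp_is_open Z P V -> @subsp_is_open Z P (fun x => U x /\ V x).
Proof.
  unfold subsp_is_open; intros HU HV.
  apply (open_ext _ _ (fun z => iff_refl _)) in HU.
  generalize (open_inter _ _ HU HV). apply open_ext.
  intro z; split.
  - intros [[n1 h1] [n2 h2]]. exists n1. split; auto.
    rewrite (proof_irrelevance _ n1 n2). exact h2.
  - intros [n [h1 h2]]; split; exists n; auto.
Qed.

Lemma subsp_union (J : Type) (U : J -> {z | P z} -> Prop) :
  (forall j, @subsp_is_open Z P (U j)) -> @subsp_is_open Z P (fun x => exists j, U j x).
Proof.
  unfold subsp_is_open; intros H.
  generalize (open_union _ H). apply open_ext.
  intro z; split.
  - intros [j [n h]]. exists n, j; exact h.
  - intros [n [j h]]. exists j, n; exact h.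
Qed.

Definition subsp : space :=
  @Space {z | P z} (@subsp_is_open Z P) (@subsp_ext Z P) subsp_full subsp_inter subsp_union.
End Sub.

Definition oget {A} (o : option A) : o <> None -> A :=
  match o return o <> None -> A with
  | Some a => fun _ => a
  | None => fun H => match H eq_refl with end
  end.
Arguments oget {A} o _.

Lemma oget_eq {A} (o : option A) n y : o = Some y -> oget o n = y.
Proof. intros; subst; reflexivity. Qed.

Lemma oget_some {A} (o : option A) (h : o <> None) : o = Some (oget o h).
Proof. destruct o; [reflexivity | now elim h]. Qed.

Definition liftP {A : Type} (V : A -> Prop) (o : option A) : Prop :=
  match o with Some y => V y | None => False end.

Lemma liftP_open (X : space) (V : X -> Prop) : is_open X V -> is_open (lift X) (liftP V).
Proof. intro H; right; split; [intro f; exact f | exact H]. Qed.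

Lemma notnone_open (X : space) : is_open (lift X) (fun o : option X => o <> None).
Proof.
  right; split; [intro h; apply h; reflexivity|].
  apply (open_ext (fun _ => True)); [|exact open_full].
  intro y; split; [intros _ e; discriminate | trivial].
Qed.

Theorem lemma3p6 (I : category) (D : diagram I) (X : space)
    (p : forall i, cmap X (dobj D i)) :
  connected I ->
  is_limit D p ->
  is_limit (lift_diagram D) (X := lift X) (fun i => lift_map (p i)).
Proof.
  intros [[i0] Hconn] [Hcone Hlim].
  split.
  { intros i j u [x|]; simpl; [rewrite Hcone|]; reflexivity. }
  intros Z q Hq.
  assert (Hnone : forall i j z, q i z = None <-> q j z = None).
  { intros i j z. generalize (Hconn i j); intro HC. induction HC as [a b [u]| a | a b _ IH | a b c _ IH1 _ IH2].
    - specialize (Hq a b u z). simpl in *.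
      destruct (q a z); destruct (q b z); simpl in Hq; split; intro; congruence.
    - tauto.
    - tauto.
    - tauto. }
  set (P := fun z => q i0 z <> None).
  assert (HP : is_open Z P) by exact (cfun_cont (q i0) _ (notnone_open _)).
  set (Z0 := @subsp Z P HP).
  assert (Hn : forall i (s : Z0), q i (proj1_sig s) <> None).
  { intros i [z n] e. apply n. apply (Hnone i0 i z). exact e. }
  set (qf := fun i (s : Z0) => oget (q i (proj1_sig s)) (Hn i s)).
  assert (Hqf : forall i s, q i (proj1_sig s) = Some (qf i s)).
  { intros i s. unfold qf. apply oget_some. }
  assert (Hqc : forall i, forall V, is_open (dobj D i) V -> is_open Z0 (fun s => V (qf i s))).
  { intros i V HV. simpl. unfold subsp_is_open.
    generalize (cfun_cont (q i) _ (@liftP_open _ _ HV)). apply open_ext.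
    intro z; split.
    - intro h. assert (n : P z).
      { unfold P. intro e. apply (Hnone i0 i z) in e. rewrite e in h. exact h. }
      exists n. pose proof (Hqf i (exist _ z n)) as E. simpl in *. rewrite E in h. exact h.
    - intros [n h]. pose proof (Hqf i (exist _ z n)) as E. simpl in *. rewrite E. exact h. }
  set (q' := fun i => @CMap Z0 (dobj D i) (qf i) (Hqc i)).
  assert (Hq'c : is_cone D q').
  { intros i j u s. simpl. specialize (Hq i j u (proj1_sig s)).
    pose proof (Hqf i s) as E1. pose proof (Hqf j s) as E2. simpl in *.
    rewrite E1, E2 in Hq. simpl in Hq. congruence. }
  destruct (Hlim Z0 q' Hq'c) as [h0 [Hh0 Hh0u]].
  set (hf := fun z => match excluded_middle_informative (P z) with
                      | left n => Some (h0 (exist _ z n))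
                      | right _ => None end).
  assert (Hhc : forall W, is_open (lift X) W -> is_open Z (fun z => W (hf z))).
  { intros W [HW | [HWN HW]].
    - apply (open_ext (fun _ => True)); [|exact open_full]. intro z; split; auto.
    - generalize (cfun_cont h0 _ HW). simpl. unfold subsp_is_open. intro HO.
      generalize (open_inter _ _ HO HP). apply open_ext. intro z; split.
      + intros [[n hn] _]. unfold hf. destruct (excluded_middle_informative (P z)) as [n'|n'].
        * rewrite (proof_irrelevance _ n' n). exact hn.
        * contradiction.
      + unfold hf. destruct (excluded_middle_informative (P z)) as [n'|n']; intro hw.
        * split; [exists n'; exact hw | exact n'].
        * contradiction. }
  exists (@CMap Z (lift X) hf Hhc).
  split.
  - intros i z. simpl. unfold hf. destruct (excluded_middle_informative (P z)) as [n|n].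
    + simpl. rewrite (Hh0 i). simpl. symmetry. exact (Hqf i (exist _ z n)).
    + symmetry. apply (Hnone i0 i z). unfold P in n. apply NNPP. exact n.
  - intros h' Hh' z. simpl. unfold hf.
    destruct (excluded_middle_informative (P z)) as [n|n].
    + assert (Hn' : forall s : Z0, h' (proj1_sig s) <> None).
      { intros s e. apply (Hn i0 s). rewrite <- (Hh' i0). rewrite e. reflexivity. }
      set (g := fun s : Z0 => oget (h' (proj1_sig s)) (Hn' s)).
      assert (Hg : forall s, h' (proj1_sig s) = Some (g s)).
      { intros s. unfold g. apply oget_some. }
      assert (Hgc : forall V, is_open X V -> is_open Z0 (fun s => V (g s))).
      { intros V HV. simpl. unfold subsp_is_open.
        generalize (open_inter _ _ (cfun_cont h' _ (@liftP_open _ _ HV)) HP). apply open_ext.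
        intro y; split.
        - intros [h1 n1]. exists n1. pose proof (Hg (exist _ y n1)) as E. simpl in *. rewrite E in h1. exact h1.
        - intros [n1 h1]. pose proof (Hg (exist _ y n1)) as E. simpl in *. split; [rewrite E; exact h1 | exact n1]. }
      set (g' := @CMap Z0 X g Hgc).
      assert (E : forall s, g' s = h0 s).
      { apply Hh0u. intros i s. simpl. specialize (Hh' i (proj1_sig s)).
        pose proof (Hg s) as E1. pose proof (Hqf i s) as E2. simpl in *.
        rewrite E1, E2 in Hh'. simpl in Hh'. congruence. }
      pose proof (Hg (exist _ z n)) as E1. pose proof (E (exist _ z n)) as E2. simpl in *.
      rewrite E1. f_equal. exact E2.
    + specialize (Hh' i0 z). unfold P in n. apply NNPP in n. rewrite n in Hh'.
      destruct (h' z); [discriminate | reflexivity].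
Qed.
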